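(* Consider the nonlinear setting of the context, with nominal trajectory $(z_k,v_k)$, tube radii $\tau_0,\dots,\tau_{T-1}\ge 0$, and scalings $\sigma_k:=\sigma(\tau_k,z_k,v_k)\ge 0$ and nonnegative diagonal matrices $\Upsilon_k$ satisfying the two bounding assumptions stated in the context. Let $\boldsymbol{\Sigma}=\mathrm{blkdiag}(\Xi,\sigma_0 I_{n_x},\dots,\sigma_{T-1}I_{n_x})$ and $\boldsymbol{\Upsilon}=\mathrm{blkdiag}(\Upsilon_0,\dots,\Upsilon_{T-1})$. Let $\boldsymbol{\Phi}$ (blocks $\boldsymbol{\Phi}^{\mathrm{xw}},\boldsymbol{\Phi}^{\mathrm{xe}},\boldsymbol{\Phi}^{\mathrm{uw}},\boldsymbol{\Phi}^{\mathrm{ue}}$) satisfy the causality conditions of the context, and suppose the closed loop is such that for every realization the deviations satisfy $$\begin{bmatrix}\Delta\mathbf{x}\\ \Delta\mathbf{u}\end{bmatrix}=\boldsymbol{\Phi}\begin{bmatrix}\boldsymbol{\delta}\\ \boldsymbol{\varepsilon}\end{bmatrix}.$$ Suppose that for all $k\in\{0,\dots,T-1\}$, all $i\in\{1,\dots,n_c\}$ and all $l\in\{1,\dots,n_x+n_u\}$, $$\Big\| c_i^\top \begin{bmatrix}\boldsymbol{\Phi}^{\mathrm{xw}}_{k}\\ \boldsymbol{\Phi}^{\mathrm{uw}}_{k}\end{bmatrix}\boldsymbol{\Sigma}\Big\|_1+\Big\| c_i^\top \begin{bmatrix}\boldsymbol{\Phi}^{\mathrm{xe}}_{k}\\ \boldsymbol{\Phi}^{\mathrm{ue}}_{k}\end{bmatrix}\boldsymbol{\Upsilon}\Big\|_1+c_i^\top\begin{bmatrix}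 z_k\\ v_k\end{bmatrix}+b_i\le 0,$$ $$\Big\| \hat e_l^\top \begin{bmatrix}\boldsymbol{\Phi}^{\mathrm{xw}}_{k}\\ \boldsymbol{\Phi}^{\mathrm{uw}}_{k}\end{bmatrix}\boldsymbol{\Sigma}\Big\|_1+\Big\| \hat e_l^\top \begin{bmatrix}\boldsymbol{\Phi}^{\mathrm{xe}}_{k}\\ \boldsymbol{\Phi}^{\mathrm{ue}}_{k}\end{bmatrix}\boldsymbol{\Upsilon}\Big\|_1\le \tau_k,$$ where $\hat e_l$ is the $l$-th standard basis vector of $\mathbb{R}^{n_x+n_u}$. Then for every initial state $x_0$ with $x_0-z_0\in\Xi\mathcal{B}^{n_x}$ and every process noise $w_k\in\mathcal{B}^{n_x}$ and measurement noise $e_k\in\mathcal{B}^{n_y}$, the closed-loop trajectory satisfies $\|(x_k-z_k,u_k-v_k)\|_\infty\le\tau_k$ and $(x_k,u_k)\in\mathcal{S}$ for all $k\in\{0,\dots,T-1\}$.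
   Context: Nonlinear system: $x_{k+1}=f(x_k,u_k)+E(x_k)w_k$, with reduced measurements $y^r_{k+1}\in\mathbb{R}^{n_r}$ ($k=0,\dots,T-1$), $f$ twice continuously differentiable, $w_k\in\mathcal{B}^{n_x}$, $e_k\in\mathcal{B}^{n_y}$, where $\mathcal{B}^n=\{z:\|z\|_\infty\le1\}$. Constraint set $\mathcal{S}=\{(x,u): c_i^\top(x,u)+b_i\le0,\ i=1,\dots,n_c\}$. Nominal trajectory: $z_{k+1}=f(z_k,v_k)$; $A_k=\partial f/\partial x(z_k,v_k)$, $B_k=\partial f/\partial u(z_k,v_k)$; linear reduced observation model $h^r(x)=C^r x$. Deviations $\Delta x_k=x_k-z_k$, $\Delta u_k=u_k-v_k$; stacked $\Delta\mathbf{x}=(\Delta x_0,\dots,\Delta x_T)$, $\Delta\mathbf{u}=(\Delta u_0,\dots,\Delta u_{T-1})$. Residuals: $d_k:=\Delta x_{k+1}-A_k\Delta x_k-B_k\Delta u_k$ and $\varepsilon_k:=(y^r_{k+1}-C^r z_k)-C^r\Delta x_k$; $\boldsymbol{\delta}=(\Delta x_0,d_0,\dots,d_{T-1})$, $\boldsymbol{\varepsilon}=(\varepsilon_0,\dots,\varepsilon_{T-1})$. Standing assumptions: $\Delta x_0\in\Xi\mathcal{B}^{n_x}$; for each $k$, whenever $\|(\Delta x_k,\Delta u_k)\|_\infty\le\tau_k$, then for all admissible noise $|d_k|\le \sigma(\tau_k,z_k,v_k)\mathbf{1}$ and $\varepsilon_k\in\Upsilon_k\mathcal{B}^{n_r}$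 (componentwise absolute value; $\mathbf{1}$ the all-ones vector). Block structure: $\boldsymbol{\Phi}^{\mathrm{xw}}$ has $(T+1)\times(T+1)$ blocks ($n_x\times n_x$), $\boldsymbol{\Phi}^{\mathrm{uw}}$ has $T\times(T+1)$ blocks ($n_u\times n_x$), $\boldsymbol{\Phi}^{\mathrm{xe}}$ has $(T+1)\times T$ blocks ($n_x\times n_r$), $\boldsymbol{\Phi}^{\mathrm{ue}}$ has $T\times T$ blocks ($n_u\times n_r$); block rows and columns indexed from $0$; column block $0$ of the w-part corresponds to $\Delta x_0$, column block $j+1$ to $d_j$, column block $j$ of the e-part to $\varepsilon_j$. Causality conditions: $\boldsymbol{\Phi}^{\mathrm{xw}}_{k,j}=0$ and $\boldsymbol{\Phi}^{\mathrm{uw}}_{k,j}=0$ for $j>k$; $\boldsymbol{\Phi}^{\mathrm{xe}}_{k,j}=0$ and $\boldsymbol{\Phi}^{\mathrm{ue}}_{k,j}=0$ for $j\ge k$. $\boldsymbol{\Phi}^{\bullet}_{k}$ denotes block row $k$; $\|\cdot\|_1$ of a row vector is the sum of absolute values. *)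

(* Defs.v *)
From HB Require Import structures.
From mathcomp Require Import all_boot all_order all_algebra.
From mathcomp Require Import all_classical all_reals all_analysis.
Set Implicit Arguments. Unset Strict Implicit. Unset Printing Implicit Defensive.
Import Order.TTheory GRing.Theory Num.Theory.
Import numFieldNormedType.Exports.
Local Open Scope ring_scope.

Definition inf_norm (R : realType) n (v : 'cV[R]_n) : R :=
  \big[Num.max/0]_(i < n) `|v i ord0|.

Definition norm1 (R : realType) m (r : 'rV[R]_m) : R :=
  \sum_(j < m) `|r ord0 j|.

Definition vdot (R : realType) n (c v : 'cV[R]_n) : R :=
  ((c^T *m v) ord0 ord0).

Definition in_scaled_ball (R : realType) n m (M : 'M[R]_(n, m)) (v : 'cV[R]_n) :=
  exists b : 'cV[R]_m, inf_norm b <= 1 /\ v = M *m b.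

Definition in_unit_ball (R : realType) n (v : 'cV[R]_n) := inf_norm v <= 1.

Definition nonneg_diag (R : realType) n (M : 'M[R]_n) :=
  (forall i j : 'I_n, i != j -> M i j = 0) /\ (forall i, 0 <= M i i).

Definition C2 (R : realType) (V W : normedModType R) (F : V -> W) :=
  [/\ forall p, differentiable F p,
      forall (v : V) p, differentiable (fun q => 'd F q v) p &
      forall (v w : V), continuous (fun q => 'd (fun q' => 'd F q' v) q w)].

(* The block  Sigma = blkdiag(Xi, sigma_0 I, ..., sigma_{T-1} I): block j *)
Definition Sigma_blk (R : realType) nx (Xi : 'M[R]_nx) (sigma : nat -> R) (j : nat)
  : 'M[R]_nx :=
  if j is j'.+1 then sigma j' *: 1%:M else Xi.

(* residual d_k = Dx_{k+1} - A_k Dx_k - B_k Du_k, with A_k, B_k the partial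
   Jacobians of f at (z_k, v_k) (applied as differentials) *)
Definition resid_d (R : realType) nx nu
  (f : 'cV[R]_nx -> 'cV[R]_nu -> 'cV[R]_nx)
  (z x : nat -> 'cV[R]_nx) (v u : nat -> 'cV[R]_nu) (k : nat) : 'cV[R]_nx :=
  (x k.+1 - z k.+1)
  - 'd (fun xi => f xi (v k)) (z k) (x k - z k)
  - 'd (fun mu => f (z k) mu) (v k) (u k - v k).

Definition resid_eps (R : realType) nx nr (Cr : 'M[R]_(nr, nx))
  (z x : nat -> 'cV[R]_nx) (yr : nat -> 'cV[R]_nr) (k : nat) : 'cV[R]_nr :=
  (yr k.+1 - Cr *m z k) - Cr *m (x k - z k).

(* stacked disturbance delta = (Dx_0, d_0, ..., d_{T-1}): block j *)
Definition delta_blk (R : realType) nx nu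
  (f : 'cV[R]_nx -> 'cV[R]_nu -> 'cV[R]_nx)
  (z x : nat -> 'cV[R]_nx) (v u : nat -> 'cV[R]_nu) (j : nat) : 'cV[R]_nx :=
  if j is j'.+1 then resid_d f z x v u j' else x 0%N - z 0%N.

(* Main.v *)
Require Import Defs.
From HB Require Import structures.
From mathcomp Require Import all_boot all_order all_algebra.
From mathcomp Require Import all_classical all_reals all_analysis.
Import Order.TTheory GRing.Theory Num.Theory.
Import numFieldNormedType.Exports.
Local Open Scope ring_scope.
From mathcomp Require Import lra.


Lemma inf_norm_ge (R : realType) n (v : 'cV[R]_n) i : `|v i ord0| <= inf_norm v.
Proof. by rewrite /inf_norm (bigD1 i) //= le_max lexx. Qed.

Lemma inf_norm_le (R : realType) n (v : 'cV[R]_n) t :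
  0 <= t -> (forall i, `|v i ord0| <= t) -> inf_norm v <= t.
Proof.
move=> t0 H; rewrite /inf_norm; apply: (big_ind (fun y => y <= t)) => //.
by move=> a b ha hb; rewrite ge_max ha hb.
Qed.

Lemma norm1_ge0 (R : realType) m (r : 'rV[R]_m) : 0 <= norm1 r.
Proof. by apply: sumr_ge0 => i _. Qed.

Lemma key_bound (R : realType) m (s : 'rV[R]_m) (b : 'cV[R]_m) :
  inf_norm b <= 1 -> `|(s *m b) ord0 ord0| <= norm1 s.
Proof.
move=> hb; rewrite mxE /norm1; apply: (le_trans (ler_norm_sum _ _ _)).
apply: ler_sum => i _; rewrite normrM.
rewrite -[X in _ <= X]mulr1; apply: ler_wpM2l => //.
apply: le_trans hb; exact: inf_norm_ge.
Qed.

Lemma scaled_bound (R : realType) m p (s : 'rV[R]_m) (M : 'M[R]_(m, p)) d :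
  in_scaled_ball M d -> `|(s *m d) ord0 ord0| <= norm1 (s *m M).
Proof. by case=> b [hb ->]; rewrite mulmxA; apply: key_bound. Qed.

Lemma sigma_ball (R : realType) n (sg : R) (d : 'cV[R]_n) :
  0 <= sg -> (forall i, `|d i ord0| <= sg) -> in_scaled_ball (sg *: 1%:M) d.
Proof.
move=> s0 H; have [sg0|sn0] := eqVneq sg 0.
  subst sg.
  exists 0; split; first by apply: inf_norm_le => // i; rewrite mxE normr0.
  apply/matrixP => i j; rewrite mulmx0 mxE ord1.
  by apply/eqP; rewrite -normr_le0; apply: H.
exists (sg^-1 *: d); split.
  apply: inf_norm_le => // i; rewrite mxE normrM normfV (ger0_norm s0).
  by rewrite ler_pdivrMl ?mulr1 ?lt_def ?sn0.
by rewrite -scalemxAl mul1mx scalerA divff // scale1r.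
Qed.

Lemma col_mx_sum (R : realType) m1 m2 n (I : finType) (A : I -> 'M[R]_(m1, n)) (B : I -> 'M[R]_(m2, n)) :
  col_mx (\sum_i A i) (\sum_i B i) = \sum_i col_mx (A i) (B i).
Proof.
apply/matrixP => i j; rewrite summxE -(splitK i).
by case: (fintype.split i) => k /=; rewrite ?col_mxEu ?col_mxEd summxE;
  apply: eq_bigr => l _; rewrite ?col_mxEu ?col_mxEd.
Qed.

Lemma entry_e (R : realType) n (l : 'I_n) (v : 'cV[R]_n) :
  (((delta_mx l ord0 : 'cV[R]_n)^T *m v) ord0 ord0) = v l ord0.
Proof. by rewrite trmx_delta -rowE mxE. Qed.

Theorem proposition3 (R : realType) (nx nu ny nr nc T : nat)
  (f : 'cV[R]_nx -> 'cV[R]_nu -> 'cV[R]_nx)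
  (E : 'cV[R]_nx -> 'M[R]_nx)
  (Cr : 'M[R]_(nr, nx))
  (c : 'I_nc -> 'cV[R]_(nx + nu)) (b : 'I_nc -> R)
  (z : nat -> 'cV[R]_nx) (v : nat -> 'cV[R]_nu)
  (Xi : 'M[R]_nx) (tau sigma : nat -> R) (Ups : nat -> 'M[R]_nr)
  (Phixw : 'I_T.+1 -> 'I_T.+1 -> 'M[R]_(nx, nx))
  (Phiuw : 'I_T -> 'I_T.+1 -> 'M[R]_(nu, nx))
  (Phixe : 'I_T.+1 -> 'I_T -> 'M[R]_(nx, nr))
  (Phiue : 'I_T -> 'I_T -> 'M[R]_(nu, nr))
  (CL : (nat -> 'cV[R]_nx) -> (nat -> 'cV[R]_nu) -> (nat -> 'cV[R]_nx) ->
        (nat -> 'cV[R]_ny) -> (nat -> 'cV[R]_nr) -> Prop) :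
  (* f twice continuously differentiable (jointly in (x,u)) *)
  C2 (fun p : 'cV[R]_nx * 'cV[R]_nu => f p.1 p.2) ->
  (* nominal trajectory *)
  (forall k, (k < T)%N -> z k.+1 = f (z k) (v k)) ->
  (* closed-loop realizations (x, u, w, e, y^r) follow the dynamics *)
  (forall x u w e yr, CL x u w e yr ->
     forall k, (k < T)%N -> x k.+1 = f (x k) (u k) + E (x k) *m w k) ->
  (* tube radii, scalings *)
  (forall k, (k < T)%N -> 0 <= tau k) ->
  (forall k, (k < T)%N -> 0 <= sigma k) ->
  (forall k, (k < T)%N -> nonneg_diag (Ups k)) ->
  (* standing bounding assumptions, for every admissible realization *)
  (forall x u w e yr, CL x u w e yr ->
     in_scaled_ball Xi (x 0%N - z 0%N) ->
     (forall k, (k < T)%N -> in_unit_ball (w k)) ->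
     (forall k, (k < T)%N -> in_unit_ball (e k)) ->
     forall k, (k < T)%N ->
       inf_norm (col_mx (x k - z k) (u k - v k)) <= tau k ->
       (forall i, `|resid_d f z x v u k i ord0| <= sigma k) /\
       in_scaled_ball (Ups k) (resid_eps Cr z x yr k)) ->
  (* causality of Phi *)
  (forall (k j : 'I_T.+1), (k < j)%N -> Phixw k j = 0) ->
  (forall (k : 'I_T) (j : 'I_T.+1), (k < j)%N -> Phiuw k j = 0) ->
  (forall (k : 'I_T.+1) (j : 'I_T), (k <= j)%N -> Phixe k j = 0) ->
  (forall (k j : 'I_T), (k <= j)%N -> Phiue k j = 0) ->
  (* closed loop: (Dx, Du) = Phi (delta, eps) for every realization *)
  (forall x u w e yr, CL x u w e yr ->
     (forall k : 'I_T.+1,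
        x k - z k = \sum_(j < T.+1) Phixw k j *m delta_blk f z x v u j
                    + \sum_(j < T) Phixe k j *m resid_eps Cr z x yr j) /\
     (forall k : 'I_T,
        u k - v k = \sum_(j < T.+1) Phiuw k j *m delta_blk f z x v u j
                    + \sum_(j < T) Phiue k j *m resid_eps Cr z x yr j)) ->
  (* constraint tightening *)
  (forall (k : 'I_T) (i : 'I_nc),
     \sum_(j < T.+1) norm1 ((c i)^T *m col_mx (Phixw (widen_ord (leqnSn T) k) j)
                                            (Phiuw k j) *m Sigma_blk Xi sigma j)
     + \sum_(j < T) norm1 ((c i)^T *m col_mx (Phixe (widen_ord (leqnSn T) k) j)
                                            (Phiue k j) *m Ups j)
     + vdot (c i) (col_mx (z k) (v k)) + b i <= 0) ->
  (* tube-radius bounds *)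
  (forall (k : 'I_T) (l : 'I_(nx + nu)),
     \sum_(j < T.+1) norm1 ((delta_mx l ord0 : 'cV[R]_(nx + nu))^T
                            *m col_mx (Phixw (widen_ord (leqnSn T) k) j) (Phiuw k j)
                            *m Sigma_blk Xi sigma j)
     + \sum_(j < T) norm1 ((delta_mx l ord0 : 'cV[R]_(nx + nu))^T
                            *m col_mx (Phixe (widen_ord (leqnSn T) k) j) (Phiue k j)
                            *m Ups j)
     <= tau k) ->
  (* conclusion *)
  forall x u w e yr, CL x u w e yr ->
    in_scaled_ball Xi (x 0%N - z 0%N) ->
    (forall k, (k < T)%N -> in_unit_ball (w k)) ->
    (forall k, (k < T)%N -> in_unit_ball (e k)) ->
    forall k, (k < T)%N ->
      inf_norm (col_mx (x k - z k) (u k - v k)) <= tau k /\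
      (forall i : 'I_nc, vdot (c i) (col_mx (x k) (u k)) + b i <= 0).
Proof.
move=> hC2 hnom hdyn htau hsig hups hbound hcxw hcuw hcxe hcue hcl hcon htube
  x u w e yr hCL hx0 hw he.
have key : forall k (hk : (k < T)%N),
  (forall j, (j < k)%N -> inf_norm (col_mx (x j - z j) (u j - v j)) <= tau j) ->
  forall r : 'rV[R]_(nx + nu),
  `|(r *m col_mx (x k - z k) (u k - v k)) ord0 ord0| <=
    \sum_(j < T.+1) norm1 (r *m col_mx (Phixw (widen_ord (leqnSn T) (Ordinal hk)) j)
                                 (Phiuw (Ordinal hk) j) *m Sigma_blk Xi sigma j)
    + \sum_(j < T) norm1 (r *m col_mx (Phixe (widen_ord (leqnSn T) (Ordinal hk)) j)
                                 (Phiue (Ordinal hk) j) *m Ups j).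
  move=> k hk IH r.
  have [Hx Hu] := hcl _ _ _ _ _ hCL.
  have -> : x k - z k = x (widen_ord (leqnSn T) (Ordinal hk)) - z (widen_ord (leqnSn T) (Ordinal hk)) by [].
  have -> : u k - v k = u (Ordinal hk) - v (Ordinal hk) by [].
  rewrite (Hx (widen_ord (leqnSn T) (Ordinal hk))) (Hu (Ordinal hk)).
  rewrite -add_col_mx !col_mx_sum mulmxDr !mulmx_sumr mxE !summxE.
  apply: le_trans (ler_normD _ _) _; apply: lerD.
    apply: le_trans (ler_norm_sum _ _ _) _; apply: ler_sum => j _.
    rewrite -mul_col_mx mulmxA.
    case: (leqP j k) => hjk.
      apply: scaled_bound.
      case: j hjk => [[|j'] hj] hjk /=; first exact: hx0.
      have hj'k : (j' < k)%N by [].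
      have [hd _] := hbound _ _ _ _ _ hCL hx0 hw he j' (ltn_trans hj'k hk) (IH j' hj'k).
      exact: sigma_ball (hsig j' (ltn_trans hj'k hk)) hd.
    rewrite (hcxw (widen_ord (leqnSn T) (Ordinal hk)) j hjk) (hcuw (Ordinal hk) j hjk).
    by rewrite col_mx0 mulmx0 mul0mx mxE normr0 norm1_ge0.
  apply: le_trans (ler_norm_sum _ _ _) _; apply: ler_sum => j _.
  rewrite -mul_col_mx mulmxA.
  case: (ltnP j k) => hjk.
    apply: scaled_bound.
    exact: (hbound _ _ _ _ _ hCL hx0 hw he j (ltn_trans hjk hk) (IH j hjk)).2.
  rewrite (hcxe (widen_ord (leqnSn T) (Ordinal hk)) j hjk) (hcue (Ordinal hk) j hjk).
  by rewrite col_mx0 mulmx0 mul0mx mxE normr0 norm1_ge0.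
have tube : forall k, (k < T)%N -> inf_norm (col_mx (x k - z k) (u k - v k)) <= tau k.
  elim/ltn_ind => k IH hk.
  apply: inf_norm_le; first exact: htau.
  move=> l; rewrite -entry_e.
  apply: le_trans (key k hk (fun j hj => IH j hj (ltn_trans hj hk)) _) _.
  exact: (htube (Ordinal hk) l).
move=> k hk; split; first exact: tube.
move=> i.
have -> : col_mx (x k) (u k) = col_mx (z k) (v k) + col_mx (x k - z k) (u k - v k).
  by rewrite add_col_mx; congr col_mx; rewrite addrC subrK.
rewrite /vdot mulmxDr mxE.
have h1 := key k hk (fun j hj => tube j (ltn_trans hj hk)) (c i)^T.
have h2 := hcon (Ordinal hk) i.
have h3 := ler_norm (((c i)^T *m col_mx (x k - z k) (u k - v k)) ord0 ord0).
rewrite /vdot in h2.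
lra.
Qed.
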